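(* Let $\mathbbm k\ge2$ be an integer, $\Gamma$ an infinite set, $\varphi\colon\Gamma\to\Gamma$ an injective map without periodic points, and $w=(w_\gamma)_{\gamma\in\Gamma}\in\mathbb Z_{\mathbbm k}^\Gamma$ invertible. Let $\sigma\colon\mathbb Z_{\mathbbm k}^\Gamma\to\mathbb Z_{\mathbbm k}^\Gamma$ be the weighted shift $(\sigma x)_\gamma=w_\gamma x_{\varphi\gamma}$. Then the $\mathbb Z_+$-semiflow generated by $\sigma$ on $\mathbb Z_{\mathbbm k}^\Gamma$ is weakly mixing, and the $\mathbb Z_+$-semiflow generated by $\sigma\times\sigma$ on $\mathbb Z_{\mathbbm k}^\Gamma\times\mathbb Z_{\mathbbm k}^\Gamma$ is Devaney chaotic.
   Context: $\mathbb Z_{\mathbbm k}=\mathbb Z/\mathbbm k\mathbb Z$ with the discrete topology, $\mathbb Z_{\mathbbm k}^\Gamma$ with the product topology. An element $k\in\mathbb Z_{\mathbbm k}$ is invertible if there is $k^{-1}$ with $kk^{-1}=1\pmod{\mathbbm k}$; $w$ is invertible if every $w_\gamma$ is. $\gamma$ is a periodic point of $\varphi$ if $\varphi^\tau\gamma=\gamma$ for some integer $\tau\ge1$. A $\mathbb Z_+$-semiflow $(f,Z)$ is topologically transitive if for all nonempty open $U,V$ there is $n\ge0$ with $f^nU\cap V\ne\emptyset$; it is weakly mixing if $(f\times f,Z\times Z)$ is topologically transitive; it is Devaney chaotic if it is topologically transitive and its periodic points ($f^nz=z$ for some $n\ge1$) are dense. *)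

(* Defs.v *)
From HB Require Import structures.
From mathcomp Require Import all_boot all_order all_algebra.
From mathcomp Require Import all_classical all_reals all_analysis.
Set Implicit Arguments. Unset Strict Implicit. Unset Printing Implicit Defensive.
Import Order.TTheory GRing.Theory Num.Theory.
Local Open Scope classical_set_scope.
Local Open Scope ring_scope.

Definition ZkGamma (k : nat) (Gamma : Type) : Type :=
  {ptws Gamma -> discrete_topology 'Z_k}.

Definition wshift (k : nat) (Gamma : Type) (phi : Gamma -> Gamma)
  (w : Gamma -> 'Z_k) (x : ZkGamma k Gamma) : ZkGamma k Gamma :=
  fun g => (w g * (x (phi g) : 'Z_k))%R.

(* Z_+ semiflow generated by f: n |-> f^n, n >= 0. *)
Definition topologically_transitive (Z : topologicalType) (f : Z -> Z) : Prop :=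
  forall U V : set Z, open U -> open V -> U !=set0 -> V !=set0 ->
    exists n : nat, ((iter n f) @` U) `&` V !=set0.

Definition prod_map (Z : Type) (f : Z -> Z) (p : Z * Z) : Z * Z :=
  (f p.1, f p.2).

Definition weakly_mixing (Z : topologicalType) (f : Z -> Z) : Prop :=
  @topologically_transitive (Z * Z)%type (prod_map f).

Definition periodic_points (Z : Type) (f : Z -> Z) : set Z :=
  [set z | exists n : nat, (0 < n)%N /\ iter n f z = z].

Definition devaney_chaotic (Z : topologicalType) (f : Z -> Z) : Prop :=
  topologically_transitive f /\ dense (periodic_points f).

(* Main.v *)
Require Import Defs.
From HB Require Import structures.
From mathcomp Require Import all_boot all_order all_algebra.
From mathcomp Require Import all_classical all_reals all_analysis.
Local Open Scope classical_set_scope.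
Local Open Scope ring_scope.
Set Implicit Arguments. Unset Strict Implicit.

Fixpoint inl (T : Type) (g : T) (l : seq T) : Prop :=
  if l is a :: l' then a = g \/ inl g l' else False.

Lemma inl_cat (T : Type) (g : T) l1 l2 : inl g (l1 ++ l2) <-> inl g l1 \/ inl g l2.
Proof. elim: l1 => [|a l1 IH] /=; first by split=> [|[]]//; right.
by rewrite IH; tauto. Qed.

Definition agree (k : nat) (Gamma : Type) (l : seq Gamma) (u x : ZkGamma k Gamma) :=
  forall g, inl g l -> x g = u g.

Lemma nbhs_basic (k : nat) (Gamma : Type) (U : set (ZkGamma k Gamma)) u :
  nbhs u U -> exists l : seq Gamma, forall x, agree l u x -> U x.
Proof.
move=> nU.
pose F : set_system {ptws Gamma -> discrete_topology 'Z_k} := [set A : set (ZkGamma k Gamma) | exists l : seq Gamma, forall x, agree l u x -> A x].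
have FF : Filter F.
  split.
  - by exists [::].
  - move=> P Q [l1 H1] [l2 H2]; exists (l1 ++ l2) => x ax; split.
      by apply: H1 => g gl; apply: ax; apply/inl_cat; left.
    by apply: H2 => g gl; apply: ax; apply/inl_cat; right.
  - by move=> P Q PQ [l H]; exists l => x /H /PQ.
have : F --> (u : {ptws Gamma -> discrete_topology 'Z_k}).
  have := (@cvg_sup _ _ (fun i : Gamma => Topological.class
    (initial_topology (fun f : (Gamma -> discrete_topology 'Z_k) => f i))) _ u FF).
  move=> [_ H]; apply: H => i A /=.
  move=> nA; rewrite nbhs_filterE; move: nA; rewrite (@nbhsE (initial_topology (fun f : (Gamma -> discrete_topology 'Z_k) => f i))) => -[B [[C oC CB] Bu] BA].
  exists [:: i] => x ax; apply: BA; rewrite -CB /=.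
  have -> : x i = u i by apply: ax; left.
  by move: Bu; rewrite -CB.
by move=> /(_ U); apply.
Qed.

Lemma nbhs2_basic (k : nat) (Gamma : Type) (U : set (ZkGamma k Gamma * ZkGamma k Gamma)) u :
  open U -> U u -> exists l : seq Gamma, forall x, agree l u.1 x.1 -> agree l u.2 x.2 -> U x.
Proof.
move=> oU Uu.
have : nbhs u U by exact: open_nbhs_nbhs.
case: u Uu => a b Uu /= [[P1 P2] [/= n1 n2] sub].
have [l1 H1] := nbhs_basic n1.
have [l2 H2] := nbhs_basic n2.
exists (l1 ++ l2) => -[x y] /= ax ay; apply: sub; split => /=.
  by apply: H1 => g gl; apply: ax; apply/inl_cat; left.
by apply: H2 => g gl; apply: ay; apply/inl_cat; right.
Qed.

Import GRing.Theory.

Fixpoint Wt (k : nat) (Gamma : Type) (phi : Gamma -> Gamma) (w : Gamma -> 'Z_k)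
  (n : nat) (g : Gamma) : 'Z_k :=
  if n is n'.+1 then w g * Wt phi w n' (phi g) else 1.

Lemma iter_wshift (k : nat) (Gamma : Type) (phi : Gamma -> Gamma) (w : Gamma -> 'Z_k)
  n (x : ZkGamma k Gamma) g :
  iter n (wshift phi w) x g = Wt phi w n g * x (iter n phi g).
Proof.
elim: n g => [|n IH] g /=; first by rewrite mul1r.
rewrite /wshift IH mulrA; congr (_ * x _).
by rewrite -iterSr.
Qed.

Lemma Wt_add (k : nat) (Gamma : Type) (phi : Gamma -> Gamma) (w : Gamma -> 'Z_k) m p g :
  Wt phi w (m + p) g = Wt phi w m g * Wt phi w p (iter m phi g).
Proof.
elim: m g => [|m IH] g /=; first by rewrite mul1r.
by rewrite IH mulrA -iterSr.
Qed.

Lemma Wt_unit (k : nat) (Gamma : Type) (phi : Gamma -> Gamma) (w : Gamma -> 'Z_k) n g :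
  (forall g, w g \is a GRing.unit) -> Wt phi w n g \is a GRing.unit.
Proof.
move=> wu; elim: n g => [|n IH] g /=; first exact: unitr1.
by rewrite unitrM wu IH.
Qed.

Lemma iter_inj (Gamma : Type) (phi : Gamma -> Gamma) n :
  injective phi -> injective (iter n phi).
Proof.
move=> inj; elim: n => [|n IH] a b //= /inj; exact: IH.
Qed.


Lemma cancel_iter (Gamma : Type) (phi : Gamma -> Gamma) i i' g g' :
  injective phi -> (i <= i')%N -> iter i phi g = iter i' phi g' ->
  g = iter (i' - i) phi g'.
Proof.
move=> inj le E; apply: (@iter_inj _ _ i inj). by rewrite E -iterD subnKC.
Qed.

Lemma sep_pair (Gamma : Type) (phi : Gamma -> Gamma) a b :
  injective phi ->
  (forall (g : Gamma) (tau : nat), (0 < tau)%N -> iter tau phi g <> g) ->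
  exists N, forall n, (N <= n)%N -> iter n phi a <> b.
Proof.
move=> inj nop.
case: (pselect (exists m, iter m phi a = b)) => [[m Hm]|H]; last first.
  by exists 0%N => n _ E; apply: H; exists n.
exists m.+1 => n Hn E.
have := cancel_iter inj (ltnW Hn) (etrans Hm (esym E)).
move=> /esym; apply: nop; rewrite subn_gt0 //.
Qed.

Lemma sep_one (Gamma : Type) (phi : Gamma -> Gamma) a (l : seq Gamma) :
  injective phi ->
  (forall (g : Gamma) (tau : nat), (0 < tau)%N -> iter tau phi g <> g) ->
  exists N, forall n, (N <= n)%N -> forall b, inl b l ->
     iter n phi a <> b /\ iter n phi b <> a.
Proof.
move=> inj nop; elim: l => [|c l [N HN]]; first by exists 0%N.
have [N1 H1] := sep_pair a c inj nop.
have [N2 H2] := sep_pair c a inj nop.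
exists (maxn N (maxn N1 N2)) => n; rewrite !geq_max => /and3P [h h1 h2] b /= [<-|bl].
  by split; [apply: H1|apply: H2].
exact: HN.
Qed.

Lemma sep_list (Gamma : Type) (phi : Gamma -> Gamma) (l : seq Gamma) :
  injective phi ->
  (forall (g : Gamma) (tau : nat), (0 < tau)%N -> iter tau phi g <> g) ->
  exists N, forall n, (N <= n)%N -> forall a b, inl a l -> inl b l ->
     iter n phi a <> b.
Proof.
move=> inj nop; elim: l => [|c l [N HN]]; first by exists 0%N.
have [N1 H1] := sep_one c (c :: l) inj nop.
exists (maxn N N1) => n; rewrite geq_max => /andP [h h1] a b /= ha hb.
case: ha => [<-|al]; first by have [] := H1 n h1 b hb.
case: hb => [<-|bl]; last exact: HN.
by have [] := H1 n h1 a (or_intror al).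
Qed.

Lemma iter_prod (Z : Type) (f : Z -> Z) n p :
  iter n (prod_map f) p = (iter n f p.1, iter n f p.2).
Proof. by elim: n => [|n IH] /=; [case: p|rewrite IH]. Qed.

Lemma mix_one (k : nat) (Gamma : Type) (phi : Gamma -> Gamma) (w : Gamma -> 'Z_k)
  (l : seq Gamma) n :
  injective phi -> (forall g, w g \is a GRing.unit) ->
  (forall a b, inl a l -> inl b l -> iter n phi a <> b) ->
  forall u v : ZkGamma k Gamma,
  exists x : ZkGamma k Gamma, agree l u x /\ agree l v (iter n (wshift phi w) x).
Proof.
move=> inj wu sep u v.
pose x : ZkGamma k Gamma := fun c =>
  match pselect (exists g, inl g l /\ c = iter n phi g) with
  | left H => (Wt phi w n (projT1 (cid H)))^-1 * v (projT1 (cid H))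
  | right _ => u c end.
exists x; split.
  move=> g gl; rewrite /x; case: pselect => // H.
  case: (cid H) => g' [g'l E] /=.
  by exfalso; apply: (sep g' g g'l gl).
move=> g gl; rewrite iter_wshift /x; case: pselect => [H|H]; last first.
  by exfalso; apply: H; exists g.
case: (cid H) => g' [g'l E] /=.
have <- := @iter_inj _ _ n inj _ _ E.
by rewrite mulrA mulrV ?mul1r //; apply: Wt_unit.
Qed.

Lemma per_one (k : nat) (Gamma : Type) (phi : Gamma -> Gamma) (w : Gamma -> 'Z_k)
  (l : seq Gamma) n :
  injective phi -> (forall g, w g \is a GRing.unit) -> (0 < n)%N ->
  (forall m, (n <= m)%N -> forall a b, inl a l -> inl b l -> iter m phi a <> b) ->
  forall a : ZkGamma k Gamma,
  exists x : ZkGamma k Gamma, agree l a x /\ iter n (wshift phi w) x = x.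
Proof.
move=> inj wu n0 sep a.
pose Fw (c : Gamma) (p : Gamma * nat) := inl p.1 l /\ c = iter (p.2 * n) phi p.1.
pose Bw (c : Gamma) (p : Gamma * nat) := inl p.1 l /\ iter (p.2.+1 * n) phi c = p.1.
have core : forall g g' j j', inl g l -> inl g' l ->
    iter (j * n) phi g = iter (j' * n) phi g' -> (j <= j')%N -> j = j' /\ g = g'.
  move=> g g' j j' gl g'l E le.
  have le' : (j * n <= j' * n)%N by rewrite leq_mul2r le orbT.
  have E' := cancel_iter inj le' E.
  rewrite -mulnBl in E'.
  case: (ltnP j j') => [lt|ge].
    exfalso; apply: (sep ((j' - j) * n)%N _ g' g g'l gl (esym E')).
    by apply: leq_pmull; rewrite subn_gt0.
  have ejj : j = j' by apply/eqP; rewrite eqn_leq le ge.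
  by split => //; rewrite E' ejj subnn mul0n.
have Fu : forall c p q, Fw c p -> Fw c q -> p = q.
  move=> c [g j] [g' j'] [/= gl E] [/= g'l E'].
  have EE : iter (j * n) phi g = iter (j' * n) phi g' by rewrite -E -E'.
  case: (leqP j j') => h.
    by have [-> ->] := core _ _ _ _ gl g'l EE h.
  by have [-> ->] := core _ _ _ _ g'l gl (esym EE) (ltnW h).
have Bu : forall c p q, Bw c p -> Bw c q -> p = q.
  have bcore : forall c g g' j j', inl g l -> inl g' l ->
      iter (j.+1 * n) phi c = g -> iter (j'.+1 * n) phi c = g' -> (j <= j')%N ->
      (g, j) = (g', j').
    move=> c g g' j j' gl g'l E E' le.
    case: (ltnP j j') => [lt|ge]; last first.
      have ejj : j = j' by apply/eqP; rewrite eqn_leq le ge.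
      by rewrite -E -E' ejj.
    exfalso; apply: (sep ((j' - j) * n)%N _ g g' gl g'l).
      by apply: leq_pmull; rewrite subn_gt0.
    rewrite -E -E' -iterD -mulnDl; congr (iter (_ * n) _ _).
    by rewrite addnS subnK // ltnW.
  move=> c [g j] [g' j'] [/= gl E] [/= g'l E'].
  case: (leqP j j') => h; first exact: bcore E E' h.
  by apply/esym; apply: bcore E' E (ltnW h).
have FB : forall c p q, Fw c p -> Bw c q -> False.
  move=> c [g j] [g' j'] [/= gl E] [/= g'l E'].
  apply: (sep (j'.+1 * n + j * n)%N _ g g' gl g'l).
    by rewrite mulSn -addnA leq_addr.
  by rewrite iterD -E.
pose x : ZkGamma k Gamma := fun c =>
  match pselect (exists p, Fw c p) with
  | left H => (Wt phi w ((projT1 (cid H)).2 * n) (projT1 (cid H)).1)^-1 * a (projT1 (cid H)).1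
  | right _ =>
    match pselect (exists p, Bw c p) with
    | left H => Wt phi w ((projT1 (cid H)).2.+1 * n) c * a (projT1 (cid H)).1
    | right _ => 0 end end.
have xF : forall c p, Fw c p -> x c = (Wt phi w (p.2 * n) p.1)^-1 * a p.1.
  move=> c p Hp; rewrite /x; case: pselect => [H|H]; last by exfalso; apply: H; exists p.
  by case: (cid H) => q Hq /=; rewrite (Fu _ _ _ Hq Hp).
have xB : forall c p, Bw c p -> x c = Wt phi w (p.2.+1 * n) c * a p.1.
  move=> c p Hp; rewrite /x; case: pselect => [[q Hq]|H].
    by exfalso; apply: (FB _ _ _ Hq Hp).
  case: pselect => [H'|H']; last by exfalso; apply: H'; exists p.
  by case: (cid H') => q Hq /=; rewrite (Bu _ _ _ Hq Hp).
have x0 : forall c, ~ (exists p, Fw c p) -> ~ (exists p, Bw c p) -> x c = 0.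
  move=> c H1 H2; rewrite /x; case: pselect => // H; case: pselect => // H'.
have main : forall c, x c = Wt phi w n c * x (iter n phi c).
  move=> c.
  case: (pselect (exists p, Fw c p)) => [[[g j] [/= gl E]]|nF].
    have F1 : Fw (iter n phi c) (g, j.+1).
      by rewrite /Fw; split => //=; rewrite E mulSn iterD.
    rewrite (xF _ _ F1) (xF c (g, j)) //= mulSnr Wt_add -E.
    by rewrite invrM ?Wt_unit // mulrA mulrA mulrV ?Wt_unit // mul1r.
  case: (pselect (exists p, Bw c p)) => [[[g j] [/= gl E]]|nB].
    rewrite (xB c (g, j)) //=.
    case: j E => [|j] E.
      have F1 : Fw (iter n phi c) (g, 0%N) by rewrite /Fw; split => //=; rewrite ?mul0n -E ?mul1n.
      by rewrite (xF _ _ F1) /= ?mul0n /= ?invr1 ?mul1r ?mul1n.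
    have B1 : Bw (iter n phi c) (g, j) by rewrite /Bw; split => //=; rewrite -iterD -mulSnr.
    by rewrite (xB _ _ B1) /= mulSn Wt_add mulrA.
  rewrite (x0 c nF nB) x0 ?mulr0 //.
    move=> [[g j] [/= gl E]].
    case: j E => [|j] E.
      by apply: nB; exists (g, 0%N); rewrite /Bw; split => //=; rewrite mul1n E mul0n.
    apply: nF; exists (g, j); rewrite /Fw; split => //=.
    by apply: (@iter_inj _ _ n inj); rewrite E -iterD -mulSn.
  move=> [[g j] [/= gl E]].
  by apply: nB; exists (g, j.+1); rewrite /Bw; split => //=; rewrite mulSnr iterD.
exists x; split.
  move=> g gl; rewrite (xF g (g, 0%N)) /= ?invr1 ?mul1r //.
apply: (@functional_extensionality_dep Gamma (fun _ => 'Z_k) (iter n (wshift phi w) x) x) => c.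
by rewrite iter_wshift -main.
Qed.

Theorem theorem6 (k : nat) (Gamma : Type) (phi : Gamma -> Gamma)
  (w : Gamma -> 'Z_k) :
  (1 < k)%N ->
  infinite_set [set: Gamma] ->
  injective phi ->
  (forall (g : Gamma) (tau : nat), (0 < tau)%N -> iter tau phi g <> g) ->
  (forall g : Gamma, w g \is a GRing.unit) ->
  weakly_mixing (wshift phi w) /\
  devaney_chaotic (prod_map (wshift phi w)).
Proof.
move=> _ _ inj nop wu.
have wm : weakly_mixing (wshift phi w).
  move=> U V oU oV [u Uu] [v Vv].
  have [lU HU] := nbhs2_basic oU Uu.
  have [lV HV] := nbhs2_basic oV Vv.
  have [N HN] := sep_list (lU ++ lV) inj nop.
  have sepN := HN N (leqnn N).
  have [x1 [ax1 bx1]] := mix_one inj wu sepN u.1 v.1.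
  have [x2 [ax2 bx2]] := mix_one inj wu sepN u.2 v.2.
  exists N, (iter N (prod_map (wshift phi w)) (x1, x2)); split.
    exists (x1, x2) => //; apply: HU => g gl /=.
      by apply: ax1; apply/inl_cat; left.
    by apply: ax2; apply/inl_cat; left.
  rewrite iter_prod; apply: HV => g gl /=.
    by apply: bx1; apply/inl_cat; right.
  by apply: bx2; apply/inl_cat; right.
split => //; split => //.
move=> O [u Ou] oO.
have [l Hl] := nbhs2_basic oO Ou.
have [N HN] := sep_list l inj nop.
have sepN : forall m, (N.+1 <= m)%N -> forall a b, inl a l -> inl b l -> iter m phi a <> b.
  by move=> m hm; apply: HN; apply: ltnW.
have [x1 [ax1 px1]] := per_one inj wu (ltn0Sn N) sepN u.1.
have [x2 [ax2 px2]] := per_one inj wu (ltn0Sn N) sepN u.2.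
exists (x1, x2); split; first exact: Hl.
exists N.+1; split => //; rewrite iter_prod; congr pair; [exact: px1|exact: px2].
Qed.
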